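(* Let $G$ be a group acting as a convergence group on a compact Hausdorff space $X$ with at least $3$ points. Then $(X,G)$ is null.
   Context: A net $\{s_i\}_{i\in I}$ in $G$ is wandering if for every $s\in G$, $s_i\neq s$ for all sufficiently large $i$. $G$ acts as a (discrete) convergence group on $X$ if the action is by homeomorphisms and for every wandering net $\{s_i\}$ in $G$ there exist $x,y\in X$ and a subnet $\{s_j\}_{j\in J}$ such that $s_jK\to y$ as $j\to\infty$ for every compact $K\subseteq X\setminus\{x\}$. For a sequence $\mathfrak s=\{s_n\}$ in $G$ and a finite open cover ${\mathcal U}$ of $X$, ${\rm h}_{\rm top}(X,{\mathcal U};\mathfrak s)=\limsup_{n\to\infty}\frac1n\log N(\bigvee_{i=1}^ns_i^{-1}{\mathcal U})$, with $N(\cdot)$ the minimal cardinality of a subcover. $(X,G)$ is null if ${\rm h}_{\rm top}(X,{\mathcal U};\mathfrak s)=0$ for all finite open covers ${\mathcal U}$ and all sequences $\mathfrak s$ in $G$. *)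

(* Defs.v *)
From HB Require Import structures.
From mathcomp Require Import all_boot all_order all_algebra.
From mathcomp Require Import monoid.
From Stdlib Require List.
From mathcomp Require Import all_classical all_reals all_analysis.

Set Implicit Arguments.
Unset Strict Implicit.
Unset Printing Implicit Defensive.

Import Order.TTheory GRing.Theory Num.Theory.
Local Open Scope classical_set_scope.
Local Open Scope ring_scope.

(* [act] is an action of the (discrete, abstract) group G on X by
   homeomorphisms: each [act g] is continuous, and the action laws hold
   (so [act g^-1] is a continuous inverse of [act g]). *)
Definition action_by_homeo (G : groupType) (X : topologicalType)
  (act : G -> X -> X) : Prop :=
  [/\ (forall x, act (@monoid.one G) x = x),
      (forall g h x, act (@monoid.mul G g h) x = act g (act h x)) &
      (forall g, continuous (act g))].

Definition directed (I : Type) (le : I -> I -> Prop) : Prop :=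
  [/\ (exists i : I, True),
      (forall i, le i i),
      (forall i j k, le i j -> le j k -> le i k) &
      (forall i j, exists k, le i k /\ le j k)].

Definition eventually_net (I : Type) (le : I -> I -> Prop) (P : I -> Prop) : Prop :=
  exists i0, forall i, le i0 i -> P i.

Definition wandering (G : Type) (I : Type) (le : I -> I -> Prop) (s : I -> G) : Prop :=
  forall s0 : G, eventually_net le (fun i => s i <> s0).

Definition subnet_map (I J : Type) (leI : I -> I -> Prop) (leJ : J -> J -> Prop)
  (phi : J -> I) : Prop :=
  forall i, eventually_net leJ (fun j => leI i (phi j)).

Definition convergence_action (G : groupType) (X : topologicalType)
  (act : G -> X -> X) : Prop :=
  action_by_homeo act /\
  forall (I : Type) (leI : I -> I -> Prop) (s : I -> G),
    directed leI -> wandering leI s ->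
    exists (x y : X) (J : Type) (leJ : J -> J -> Prop) (phi : J -> I),
      [/\ directed leJ, subnet_map leI leJ phi &
        forall K : set X, compact K -> K `<=` ~` [set x] ->
          forall U : set X, nbhs y U ->
            eventually_net leJ (fun j => act (s (phi j)) @` K `<=` U)].

Definition finite_open_cover (X : topologicalType) (U : seq (set X)) : Prop :=
  (forall A, List.In A U -> open A) /\ \bigcup_(A in [set A | List.In A U]) A = setT.

Definition has_subcover_of_size (X : Type) (V : seq (set X)) (n : nat) : Prop :=
  exists W : seq (set X), [/\ size W = n,
    (forall A, List.In A W -> List.In A V) &
    \bigcup_(A in [set A | List.In A W]) A = setT].

(* N(V): minimal cardinality of a subcover of V (0 if V is not a cover) *)
Definition Ncov (X : Type) (V : seq (set X)) : nat :=
  match pselect (exists n, asbool (has_subcover_of_size V n)) with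
  | left h => ex_minn h
  | right _ => 0%N
  end.

Definition cover_pullback (G : Type) (X : Type) (act : G -> X -> X)
  (g : G) (U : seq (set X)) : seq (set X) :=
  [seq act g @^-1` A | A <- U].

Definition cover_join (X : Type) (Us : seq (seq (set X))) : seq (set X) :=
  foldr (fun U acc => [seq A `&` B | A <- U, B <- acc]) [:: setT] Us.

Definition htop_seq (R : realType) (G : Type) (X : Type) (act : G -> X -> X)
  (U : seq (set X)) (s : nat -> G) : \bar R :=
  limn_esup (fun n : nat =>
    ((ln ((Ncov (cover_join [seq cover_pullback act (s i) U | i <- iota 1 n]))%:R : R))
      / n%:R)%:E).

Definition null_system (R : realType) (G : Type) (X : topologicalType)
  (act : G -> X -> X) : Prop :=
  forall (U : seq (set X)) (s : nat -> G),
    finite_open_cover U -> htop_seq R act U s = 0%E.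

(* Main.v *)
Require Import Defs.
From HB Require Import structures.
From mathcomp Require Import all_boot all_order all_algebra.
From mathcomp Require Import monoid.
From mathcomp Require Import all_classical all_reals all_analysis.
From Stdlib Require List.
From mathcomp Require Import zify.
From Stdlib Require Import Lia.
Set Implicit Arguments.
Unset Strict Implicit.
Unset Printing Implicit Defensive.
Import Order.TTheory GRing.Theory Num.Theory.
Lemma In_map (A B : Type) (f : A -> B) (x : A) (l : seq A) :
  List.In x l -> List.In (f x) (map f l).
Proof. elim: l => //= a l IH [->|h]; [by left|right; exact: IH]. Qed.

Lemma In_cat (A : Type) (x : A) (l1 l2 : seq A) :
  List.In x (l1 ++ l2) <-> List.In x l1 \/ List.In x l2.
Proof. elim: l1 => /=[|a l IH]; [tauto|rewrite IH; tauto]. Qed.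

Section Comb.
Variables (X : Type) (I : eqType) (P : I -> bool -> X -> Prop).
Hypothesis Pdisj : forall i z, P i false z -> P i true z -> False.

Fixpoint tree (W : seq I) (Z : X -> Prop) (d : nat) : Prop :=
  match d with
  | 0 => exists z, Z z
  | d'.+1 => exists i, i \in W /\ tree W (fun z => Z z /\ P i false z) d' /\
                      tree W (fun z => Z z /\ P i true z) d'
  end.

Lemma tree_mono W W' (Z Z' : X -> Prop) d : {subset W <= W'} ->
  (forall z, Z z -> Z' z) -> tree W Z d -> tree W' Z' d.
Proof.
move=> sW; elim: d Z Z' => [|d IH] Z Z' sZ /=.
  by case=> z Zz; exists z; exact: sZ.
case=> i [iW [t0 t1]]; exists i; split; first exact: sW.
by split; [apply: IH t0|apply: IH t1] => z [Zz Pz]; split => //; exact: sZ.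
Qed.

Definition upd (s : I -> bool) i c := fun j => if j == i then c else s j.

Lemma disamb W : forall (Z : X -> Prop) d, ~ tree W Z d ->
  exists L : seq (I -> bool), (size L <= (size W).+1 ^ d)%N /\
    forall z, Z z -> exists2 s, List.In s L & forall i, i \in W -> ~ P i (s i) z.
Proof.
elim: W => [|i W IH] Z [|d] nt.
- exists [::]; split => // z Zz; exfalso; apply: nt; by exists z.
- exists [:: fun _ => false]; split; first by rewrite exp1n.
  by move=> z _; exists (fun _ => false) => //; left.
- exists [::]; split => // z Zz; exfalso; apply: nt; by exists z.
have [c nc] : exists c, ~ tree (i :: W) (fun z => Z z /\ P i c z) d.
  case: (pselect (tree (i :: W) (fun z => Z z /\ P i false z) d)) => h0.
    exists true => h1; apply: nt; exists i; split; first exact: mem_head.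
    by split.
  by exists false.
have sW : {subset W <= i :: W} by move=> j jW; rewrite in_cons jW orbT.
have [L1 [sL1 cL1]] := IH (fun z => Z z /\ P i c z) d
  (fun t => nc (tree_mono sW (fun z h => h) t)).
have [L2 [sL2 cL2]] := IH (fun z => Z z /\ ~ P i c z) d.+1
  (fun t => nt (tree_mono sW (fun z h => proj1 h) t)).
exists (map (fun s => upd s i (~~ c)) L1 ++ map (fun s => upd s i c) L2).
split.
  rewrite size_cat !size_map /=.
  apply: (@leq_trans ((size W).+1 ^ d + (size W).+1 ^ d.+1)); first exact: leq_add.
  rewrite expnS -[X in (X + _ <= _)%N]mul1n -mulnDl add1n.
  rewrite [X in (_ <= X)%N]expnS leq_mul2l; apply/orP; right.
  by elim: (d) => // d0 IHd; rewrite !expnS; apply: leq_mul.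
move=> z Zz; case: (pselect (P i c z)) => Pc.
  have [s s1 hs] := cL1 z (conj Zz Pc).
  exists (upd s i (~~ c)).
    by apply/In_cat; left; apply: In_map.
  move=> j; rewrite in_cons /upd; case: (j =P i) => [->|_] /= jW.
    by case: (c) Pc => Pc; [move/Pdisj: Pc|move=> /Pdisj; apply].
  exact: hs.
have [s s2 hs] := cL2 z (conj Zz Pc).
exists (upd s i c).
  by apply/In_cat; right; apply: In_map.
move=> j; rewrite in_cons /upd; case: (j =P i) => [->|_] /= jW //.
exact: hs.
Qed.


Lemma tree_ne W Z d : tree W Z d -> exists z, Z z.
Proof.
elim: d Z => [|d IH] Z //= [i [_ [t0 _]]].
by have [z [Zz _]] := IH _ t0; exists z.
Qed.

Definition actv (Z : X -> Prop) j :=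
  (exists z, Z z /\ P j false z) /\ (exists z, Z z /\ P j true z).

Definition cnt W (Z : X -> Prop) := count (fun j => `[< actv Z j >]) W.

Variables (Nb : I -> seq I) (Delta : nat).
Hypothesis Nb_size : forall i, (size (Nb i) <= Delta)%N.
Hypothesis Nb_pair : forall i j,
  (forall a b, exists z, P i a z /\ P j b z) -> j \in Nb i.

Lemma depth W : uniq W -> forall d Z, tree W Z d ->
  (d <= cnt W Z)%N /\ ((Delta < d)%N -> (2 ^ d <= 2 ^ Delta.+1 * (cnt W Z - Delta))%N).
Proof.
move=> uW; elim=> [|d IH] Z; first by move=> _; split => //.
case=> i [iW [t0 t1]].
have [h0 h0'] := IH _ t0; have [h1 h1'] := IH _ t1.
set Z0 := (fun z => Z z /\ P i false z) in t0 h0 h0'.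
set Z1 := (fun z => Z z /\ P i true z) in t1 h1 h1'.
set a0 := (fun j => `[< actv Z0 j >]).
set a1 := (fun j => `[< actv Z1 j >]).
set aZ := (fun j => `[< actv Z j >]).
have e := count_predUI a0 a1 W.
have v0 : (count (predI a0 a1) W <= count a0 W)%N.
  by apply: sub_count => j /andP[].
have v1 : (count (predI a0 a1) W <= count a1 W)%N.
  by apply: sub_count => j /andP[].
have vD : (count (predI a0 a1) W <= Delta)%N.
  apply: leq_trans (Nb_size i); rewrite -size_filter.
  apply: uniq_leq_size; first exact: filter_uniq.
  move=> j; rewrite mem_filter => /andP[/andP[/asboolP A0 /asboolP A1] _].
  case: A0 => [[z0 [[_ p0] q0]] [z1 [[_ p1] q1]]].
  case: A1 => [[z2 [[_ p2] q2]] [z3 [[_ p3] q3]]].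
  apply: Nb_pair => -[] [].
  - by exists z3.
  - by exists z2.
  - by exists z1.
  - by exists z0.
have uc : (count (predU a0 a1) W).+1 <= cnt W Z.
  have ni : forall j, predI (predU a0 a1) (pred1 i) j = false.
    move=> j /=; apply/negP => /andP[+ /eqP ji]; subst j.
    case/orP => /asboolP [[z [[_ p] q]] [z' [[_ p'] q']]].
      exact: Pdisj p' q'.
    exact: Pdisj q p.
  have := count_predUI (predU a0 a1) (pred1 i) W.
  rewrite (eq_count ni) count_pred0 addn0 => e2.
  have c1 : (0 < count (pred1 i) W)%N by rewrite -has_count; apply/hasP; exists i => //=.
  have : (count (predU (predU a0 a1) (pred1 i)) W <= cnt W Z)%N.
    apply: sub_count => j /orP[/orP[] /asboolP|/eqP ->].
    - by case=> [[z [[Zz _] p]] [z' [[Zz' _] p']]]; apply/asboolP; split; [exists z|exists z'].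
    - by case=> [[z [[Zz _] p]] [z' [[Zz' _] p']]]; apply/asboolP; split; [exists z|exists z'].
    - have [z [Zz p]] := tree_ne t0; have [z' [Zz' p']] := tree_ne t1.
      by apply/asboolP; split; [exists z|exists z'].
  rewrite /cnt -/aZ; lia.
rewrite /cnt -/a0 -/a1 in h0 h1 h0' h1'.
have dc : (d.+1 <= cnt W Z)%N by lia.
split => // Dd.
have [Dd'|Dd'] := eqVneq d Delta.
  subst d; rewrite -[X in (X <= _)%N]muln1 leq_mul2l; apply/orP; right; lia.
have Dlt : (Delta < d)%N by lia.
have q0 := h0' Dlt; have q1 := h1' Dlt.
apply: (@leq_trans (2 ^ Delta.+1 * (count a0 W - Delta) + 2 ^ Delta.+1 * (count a1 W - Delta))).
  by rewrite expnS mul2n -addnn; exact: leq_add q0 q1.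
rewrite -mulnDr leq_mul2l; apply/orP; right; move: uc; rewrite /cnt -/aZ => uc; lia.
Qed.

End Comb.

Section Analytic.
Local Open Scope classical_set_scope.
Local Open Scope ring_scope.
Lemma an_key (R : realType) (c t N y : nat) : (1 <= N)%N -> (1 <= y)%N ->
  (N <= y ^ (c + t))%N -> (2 ^ t <= y)%N ->
  ln (N%:R : R) <= (4 * c%:R + 16 / ln 2) * Num.sqrt (y%:R).
Proof.
move=> N1 y1 Ny ty.
have l2 : 0 < ln (2:R) by apply: ln_gt0; rewrite ltr1n.
set Y : R := y%:R.
have Y1 : 1 <= Y by rewrite ler1n.
have Y0 : 0 < Y by apply: lt_le_trans Y1.
have L0 : 0 <= ln Y by exact: ln_ge0.
have h1 : ln (N%:R : R) <= (c + t)%:R * ln Y.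
  apply: (@le_trans _ _ (ln (Y ^+ (c + t)))).
    rewrite ler_ln ?posrE ?ltr0n ?exprn_gt0 //.
    by rewrite /Y -natrX ler_nat.
  by rewrite lnXn // mulr_natl.
have h2 : t%:R * ln (2:R) <= ln Y.
  rewrite mulr_natl -lnXn // ler_ln ?posrE ?exprn_gt0 //.
  by rewrite /Y -natrX ler_nat.
set s := Num.sqrt Y; set q := Num.sqrt s.
have s1 : 1 <= s by rewrite /s -sqrtr1 ler_wsqrtr.
have q1 : 1 <= q by rewrite /q -sqrtr1 ler_wsqrtr.
have q0 : 0 < q by apply: lt_le_trans q1.
have qq : q ^+ 2 = s by rewrite sqr_sqrtr // sqrtr_ge0.
have ss : s ^+ 2 = Y by rewrite sqr_sqrtr // ltW.
have Lq : ln Y <= 4 * q.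
  have eY : ln Y = ln q *+ 4.
    by rewrite -lnXn // (_ : 4%N = (2 * 2)%N) // exprM qq ss.
  rewrite eY -[ln q *+ 4]mulr_natl; apply: ler_wpM2l => //.
  exact/ltW/ln_sublinear.
have qs : q <= s by rewrite -qq expr2 ler_peMr // ltW.
have LL : ln Y * ln Y <= 16 * s.
  apply: (@le_trans _ _ ((4 * q) * (4 * q))).
    by apply: ler_pM => //.
  by rewrite mulrACA -qq expr2; apply: ler_wpM2r; [exact: mulr_ge0 (ltW q0) (ltW q0)|rewrite -natrM].  
have tL : t%:R <= ln Y / ln 2 by rewrite ler_pdivlMr.
apply: (le_trans h1); rewrite natrD mulrDl mulrDl.
apply: lerD.
  rewrite [4 * _]mulrC -mulrA; apply: ler_wpM2l => //.
  by apply: (le_trans Lq); apply: ler_wpM2l.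
apply: (@le_trans _ _ (ln Y / ln 2 * ln Y)).
  by apply: ler_wpM2r.
by rewrite mulrAC [16 / _ * _]mulrAC; apply: ler_wpM2r => //; rewrite invr_ge0 ltW.
Qed.

Lemma an_lim (R : realType) (a c : nat) (N tl : nat -> nat) :
  (forall n, (1 <= N n)%N) -> (forall n, (N n <= (a * n).+1 ^ (c + tl n))%N) ->
  (forall n, (2 ^ tl n <= (a * n).+1)%N) ->
  limn_esup (fun n => ((ln (N n)%:R : R) / n%:R)%:E) = 0%E.
Proof.
move=> N1 Nb tb.
set K : R := 4 * c%:R + 16 / ln 2.
have l2 : 0 < ln (2:R) by apply: ln_gt0; rewrite ltr1n.
have K0 : 0 <= K.
  by apply: addr_ge0; [apply: mulr_ge0|apply: divr_ge0 => //; exact: ltW].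
have cv : (fun n => ln (N n)%:R / n%:R : R) @ \oo --> 0.
  apply/cvgrPdist_le => e e0.
  near=> n.
  have n1 : (1 <= n)%N by near: n; exact: nbhs_infty_ge.
  have nb : K ^+ 2 * (a.+1)%:R / e ^+ 2 <= n%:R.
    by near: n; exact: nbhs_infty_ger.
  have n0 : (0 : R) < n%:R by rewrite ltr0n.
  have r0 : 0 <= ln (N n)%:R / n%:R :> R.
    by apply: divr_ge0 => //; apply: ln_ge0; rewrite ler1n.
  rewrite sub0r normrN ger0_norm // ler_pdivrMr //.
  apply: (le_trans (an_key R (N1 n) (ltn0Sn _) (Nb n) (tb n))).
  have lhs0 : 0 <= K * Num.sqrt ((a * n).+1)%:R by apply: mulr_ge0 => //; exact: sqrtr_ge0.
  have rhs0 : 0 <= e * n%:R by apply: mulr_ge0; [exact: ltW|exact: ltW].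
  rewrite -(ler_pXn2r (isT : (0 < 2)%N)) ?nnegrE //.
  rewrite exprMn sqr_sqrtr ?ler0n // exprMn.
  apply: (@le_trans _ _ (K ^+ 2 * ((a.+1)%:R * n%:R))).
    apply: ler_wpM2l; first exact: exprn_ge0.
    by rewrite -natrM ler_nat mulSn addnC -addn1 mulnC leq_add2l.
  rewrite mulrA [n%:R ^+ 2]expr2 mulrA; apply: ler_wpM2r; first exact: ltW.
  by move: nb; rewrite ler_pdivrMr ?exprn_gt0 // [n%:R * _]mulrC.
have cvE : (fun n => (ln (N n)%:R / n%:R : R)%:E) @ \oo --> 0%E.
  by apply: cvg_EFin => //; near=> n.
rewrite is_cvg_limn_esupE; last by apply/cvg_ex; exists 0%E.
exact: cvg_lim cvE.
Unshelve. all: by end_near.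
Qed.

End Analytic.

Section TopoAll.
Local Open Scope classical_set_scope.
Section Topo.
Variable X : topologicalType.
Hypotheses (hX : hausdorff_space X) (cX : compact [set: X]).

Lemma shrink (U : seq (set X)) : forall O : set X, open O ->
  (forall k, (k < size U)%N -> open (nth set0 U k)) ->
  (forall x, O x \/ exists2 k, (k < size U)%N & nth set0 U k x) ->
  exists C : seq (set X), [/\ size C = size U,
    (forall k, (k < size U)%N -> closed (nth set0 C k) /\ nth set0 C k `<=` nth set0 U k) &
    (forall x, O x \/ exists2 k, (k < size U)%N & nth set0 C k x)].
Proof.
elim: U => [|u U IH] O oO oU cov.
  exists [::]; split => // x; case: (cov x) => [?|[]]; by [left|].
pose B := O `|` \bigcup_(k in [set k | (k < size U)%N]) nth set0 U k.
have oB : open B.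
  apply: openU => //; apply: bigcup_open => k kU; exact: (oU k.+1).
have cA : closed (~` B) by exact: open_closedC.
have Au : ~` B `<=` u.
  move=> x nBx; case: (cov x) => [Ox|[[|k] kU ux]] //.
  - by exfalso; apply: nBx; left.
  - by exfalso; apply: nBx; right; exists k.
have nX := compact_normal hX cX.
have snu : set_nbhs (~` B) u.
  apply/set_nbhsP; exists u; split => //; exact: (oU 0%N).
have [V snV clVu] := nX _ cA _ snu.
have [W [oW AW WV]] := (set_nbhsP _ _).1 snV.
have [|||C [sC hC cC]] := IH (O `|` W).
- exact: openU.
- by move=> k kU; exact: (oU k.+1).
- move=> x; case: (pselect (B x)) => [[Ox|[k kU Ukx]]|nBx].
  + by left; left.
  + by right; exists k.
  + by left; right; apply: AW.
exists (closure V :: C); split => /=.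
- by rewrite sC.
- move=> [|k] kU /=; first by split; [exact: closed_closure|].
  exact: hC.
- move=> x; case: (cC x) => [[Ox|Wx]|[k kU Ckx]].
  + by left.
  + by right; exists 0%N => //=; apply: subset_closure; apply: WV.
  + by right; exists k.+1.
Qed.


Lemma exc_finite (G : groupType) (act : G -> X -> X) : convergence_action act ->
  forall A B : bool -> set X, (forall a, closed (A a)) -> (forall b, closed (B b)) ->
  (forall x, A false x -> A true x -> False) -> (forall x, B false x -> B true x -> False) ->
  exists T : seq G, forall e, (forall a b, exists w, A a w /\ B b (act e w)) -> e \in T.
Proof.
move=> [_ conv] A B cA cB dA dB.
apply: contrapT => nT.
have hs : forall L : seq G, exists e, (forall a b, exists w, A a w /\ B b (act e w)) /\ e \notin L.
  move=> L; apply: contrapT => nL; apply: nT; exists L => e be.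
  apply: contrapT => /negP eL; apply: nL; by exists e.
pose s := fun L => proj1_sig (cid (hs L)).
have sP L : (forall a b, exists w, A a w /\ B b (act (s L) w)) /\ s L \notin L.
  exact: proj2_sig (cid (hs L)).
pose le := fun L L' : seq G => {subset L <= L'}.
have dI : directed le.
  split.
  - by exists [::].
  - by move=> L.
  - by move=> L1 L2 L3 h1 h2 z /h1 /h2.
  - move=> L1 L2; exists (L1 ++ L2); split => z zL; rewrite mem_cat zL ?orbT //.
have wI : wandering le s.
  move=> s0; exists [:: s0] => L hL sL; have := (sP L).2; rewrite sL.
  by rewrite hL // mem_head.
have [x [y [J [leJ [phi [dJ _ H]]]]]] := conv _ le s dI wI.
have [a xa] : exists a, ~ A a x.
  case: (pselect (A false x)) => h; last by exists false.
  by exists true => h'; exact: dA h h'.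
have [b yb] : exists b, ~ B b y.
  case: (pselect (B false y)) => h; last by exists false.
  by exists true => h'; exact: dB h h'.
have cK : compact (A a) by apply: (subclosed_compact (cA a) cX).
have Kx : A a `<=` ~` [set x] by move=> z Az zx; apply: xa; rewrite -zx.
have nU : nbhs y (~` B b).
  apply: open_nbhs_nbhs; split => //; exact: closed_openC.
have [j0 Hj] := H _ cK Kx _ nU.
case: dJ => _ rJ _ _.
have [w [Aw Bw]] := (sP (phi j0)).1 a b.
exact: (Hj j0 (rJ j0) (act (s (phi j0)) w) (ex_intro2 _ _ w Aw erefl)) Bw.
Qed.

End Topo.

Lemma In_map_inv (A B : Type) (f : A -> B) (y : B) (l : seq A) :
  List.In y (map f l) -> exists x, List.In x l /\ y = f x.
Proof.
elim: l => //= a l IH [<-|h]; first by exists a; split => //; left.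
by have [x [xl ->]] := IH h; exists x; split => //; right.
Qed.

Section Covers.
Variable T : Type.

Lemma In_allpairs (U L : seq (set T)) A B : List.In A U -> List.In B L ->
  List.In (A `&` B) [seq A `&` B | A <- U, B <- L].
Proof.
elim: U => //= a U IH [<-|h] BL; apply/In_cat; first by left; apply: In_map.
by right; apply: IH.
Qed.

Lemma In_join (Us : seq (seq (set T))) (Y : set T) :
  (forall U, List.In U Us -> exists A, List.In A U /\ Y `<=` A) ->
  exists B, List.In B (cover_join Us) /\ Y `<=` B.
Proof.
elim: Us => [|U Us IH] h /=; first by exists setT; split => //; left.
have [A [AU YA]] := h U (or_introl erefl).
have [B [BJ YB]] := IH (fun V hV => h V (or_intror hV)).
exists (A `&` B); split; first exact: In_allpairs.
by move=> z Yz; split; [exact: YA|exact: YB].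
Qed.

Lemma Ncov_le (J Ys : seq (set T)) : (exists x0 : T, True) ->
  (forall x, exists Y, List.In Y Ys /\ Y x) ->
  (forall Y, List.In Y Ys -> exists B, List.In B J /\ Y `<=` B) ->
  (1 <= Ncov J <= size Ys)%N.
Proof.
move=> [x0 _] cov sub.
have [W [sW WJ WY]] : exists W : seq (set T), [/\ size W = size Ys,
    (forall B, List.In B W -> List.In B J) &
    (forall Y, List.In Y Ys -> exists B, List.In B W /\ Y `<=` B)].
  elim: Ys {cov} sub => [|Y Ys IH] sub.
    by exists [::]; split.
  have [B [BJ YB]] := sub Y (or_introl erefl).
  have [W [sW WJ WY]] := IH (fun Z hZ => sub Z (or_intror hZ)).
  exists (B :: W); split => /=.
  - by rewrite sW.
  - by move=> B' [<-|h] //; exact: WJ.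
  - move=> Z [<-|h]; first by exists B; split => //; left.
    by have [B' [h1 h2]] := WY Z h; exists B'; split => //; right.
have hs : has_subcover_of_size J (size Ys).
  exists W; split => //; apply/seteqP; split => // x _.
  have [Y [YY Yx]] := cov x; have [B [BW YB]] := WY Y YY.
  by exists B => //; apply: YB.
rewrite /Ncov; case: pselect => [h|h]; last first.
  by exfalso; apply: h; exists (size Ys); apply/asboolP.
case: ex_minnP => m /asboolP [W' [sW' _ cW']] minm.
apply/andP; split.
  case: m sW' {minm} => // /size0nil W'0; subst W'.
  have : [set: T] x0 by [].
  by rewrite -cW' => -[B []].
by apply: minm; apply/asboolP.
Qed.

End Covers.

End TopoAll.

Lemma In_mem (T : eqType) (x : T) l : List.In x l -> x \in l.
Proof. elim: l => //= a l IH [->|h]; first by rewrite mem_head. by rewrite in_cons (IH h) orbT. Qed.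

Lemma nth_In (T : Type) (d : T) l k : (k < size l)%N -> List.In (nth d l k) l.
Proof. elim: l k => //= a l IH [|k] /= h; [by left|right; exact: IH]. Qed.

Lemma In_nth (T : Type) (d : T) l A : List.In A l -> exists2 k, (k < size l)%N & nth d l k = A.
Proof.
elim: l => //= a l IH [->|h]; first by exists 0%N.
by have [k kl <-] := IH h; exists k.+1.
Qed.

Lemma fin_union (G : eqType) (Q : nat * nat -> G -> Prop) (ps : seq (nat * nat)) :
  (forall p, p \in ps -> exists T : seq G, forall e, Q p e -> e \in T) ->
  exists T : seq G, forall p, p \in ps -> forall e, Q p e -> e \in T.
Proof.
elim: ps => [|p ps IH] h; first by exists [::].
have [T1 h1] := h p (mem_head _ _).
have [T2 h2] : exists T : seq G, forall q, q \in ps -> forall e, Q q e -> e \in T.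
  by apply: IH => q qps; apply: h; rewrite in_cons qps orbT.
exists (T1 ++ T2) => q; rewrite in_cons => /orP[/eqP ->|qps] e Qe; rewrite mem_cat.
  by rewrite h1.
by rewrite (h2 q qps e Qe) orbT.
Qed.

Section Main.
Local Open Scope classical_set_scope.
Variables (G : groupType) (X : topologicalType) (act : G -> X -> X).
Hypotheses (cX : compact [set: X]) (hX : hausdorff_space X).
Variable x0 : X.
Hypothesis cA : convergence_action act.
Variables (U : seq (set X)) (s : nat -> G).
Hypothesis fU : finite_open_cover U.

Let m := size U.

Lemma oUk k : (k < m)%N -> open (nth set0 U k).
Proof. by move=> km; apply: fU.1; apply: nth_In. Qed.

Lemma covk x : set0 x \/ exists2 k, (k < m)%N & nth set0 U k x.
Proof.
right; have : [set: X] x by [].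
rewrite -fU.2 => -[A AU Ax]; have [k km kA] := In_nth set0 AU.
by exists k; rewrite ?kA.
Qed.

Lemma main_bound : exists (c : nat) (tl : nat -> nat), forall n,
  let N := Ncov (cover_join [seq cover_pullback act (s i) U | i <- iota 1 n]) in
  [/\ (1 <= N)%N, (N <= (m * n).+1 ^ (c + tl n))%N & (2 ^ tl n <= (m * n).+1)%N].
Proof.
have [C [sC hC cC]] := shrink hX cX open0 oUk covk.
pose A (k : nat) (b : bool) : set X := if b then nth set0 C k else ~` nth set0 U k.
have Ad k x : A k false x -> A k true x -> False.
  rewrite /A => nU Cx; case: (ltnP k m) => km.
    by apply: nU; apply: (hC k km).2.
  by move: Cx; rewrite nth_default // sC.
have Acl k : (k < m)%N -> forall b, closed (A k b).
  move=> km [] /=; first exact: (hC k km).1.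
  exact/open_closedC/oUk.
have CU k x : nth set0 C k x -> (k < m)%N.
  by case: (ltnP k m) => // km; rewrite nth_default // sC.
pose bad (p : nat * nat) (e : G) := forall a b, exists w, A p.1 a w /\ A p.2 b (act e w).
have [T hT] : exists T : seq G, forall p, p \in [seq (k, l) | k <- iota 0 m, l <- iota 0 m] ->
    forall e, bad p e -> e \in T.
  apply: fin_union => p /allpairsP [[k l] [/= kin lin ->]].
  rewrite mem_iota /= in kin; rewrite mem_iota /= in lin.
  exact: (exc_finite cX cA (Acl k kin) (Acl l lin) (Ad k) (Ad l)).
have [_ actM _] := cA.1.
pose P (i : G * nat) (b : bool) (z : X) := A i.2 b (act i.1 z).
have Pd : forall i z, P i false z -> P i true z -> False by move=> i z; exact: Ad.
pose Nb (i : G * nat) := [seq (monoid.mul e i.1, l) | e <- T, l <- iota 0 m].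
have Nbs : forall i, (size (Nb i) <= size T * m)%N.
  by move=> i; rewrite size_allpairs size_iota.
have Nbp : forall i j, (forall a b, exists z, P i a z /\ P j b z) -> j \in Nb i.
  move=> [g k] [h l] H.
  have [z [Ck Cl]] := H true true.
  have km := CU _ _ Ck; have lm := CU _ _ Cl.
  pose e := monoid.mul h (monoid.inv g).
  have be : bad (k, l) e.
    move=> a b; have [w [p1 p2]] := H a b; exists (act g w); split => //.
    by rewrite /= -actM divgK.
  have eT : e \in T.
    by apply: (hT (k, l)) be; apply: allpairs_f; rewrite mem_iota.
  apply/allpairsP; exists (e, l); split; rewrite ?mem_iota //=.
  by rewrite divgK.
pose W n := [seq (g, k) | g <- undup [seq s i | i <- iota 1 n], k <- iota 0 m].
pose Delta := (size T * m)%N.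
exists Delta.+2, (fun n => trunc_log 2 (size (W n))) => n N.
set Wn := W n; set M := size Wn; set t := trunc_log 2 M.
have uW : uniq Wn.
  apply: allpairs_uniq; [exact: undup_uniq|exact: iota_uniq|].
  by move=> [? ?] [? ?].
have sW : (M <= m * n)%N.
  rewrite /M /Wn /W size_allpairs size_iota mulnC leq_mul2l; apply/orP; right.
  by apply: (leq_trans (size_undup _)); rewrite size_map size_iota.
have nt : ~ tree P Wn setT (Delta.+1 + t.+1).
  move=> tr; have [_ h] := depth Pd Nbs Nbp uW tr.
  have cM : (cnt P Wn setT <= M)%N by apply: count_size.
  have Mt : (M < 2 ^ t.+1)%N by apply: trunc_log_ltn.
  have := h (ltn_addr _ (ltnSn _)).
  rewrite expnD leq_pmul2l ?expn_gt0 // => h2.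
  lia.
have [L [sL cL]] := disamb Pd nt.
pose Y (sg : G * nat -> bool) := [set z | forall i, i \in Wn -> ~ P i (sg i) z].
pose Ys := map Y L.
have [k0 k0m _] : exists2 k, (k < m)%N & nth set0 U k x0.
  by case: (covk x0).
have hN : (1 <= N <= size Ys)%N.
  apply: Ncov_le; first by exists x0.
    move=> x; have [sg sgL hsg] := cL x I.
    by exists (Y sg); split => //; apply: In_map.
  move=> Yv YvIn; have [sg [sgL ->]] := In_map_inv YvIn.
  apply: In_join => V VIn; have [i [iin ->]] := In_map_inv VIn.
  set g := s i.
  have gS : forall k, (k < m)%N -> (g, k) \in Wn.
    move=> k km; apply: allpairs_f; last by rewrite mem_iota.
    by rewrite mem_undup; apply: map_f; apply: In_mem.
  case: (pselect (exists2 k, (k < m)%N & sg (g, k) = false)) => [[k km sk]|nk].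
    exists (act g @^-1` nth set0 U k); split; first by apply: In_map; apply: nth_In.
    move=> z Yz; have := Yz (g, k) (gS k km); rewrite /P sk /A /= => hh.
    exact: contrapT.
  exists (act g @^-1` nth set0 U k0); split; first by apply: In_map; apply: nth_In.
  move=> z Yz; exfalso.
  have [[]|[k km Ck]] := cC (act g z).
  case E : (sg (g, k)).
    by apply: (Yz (g, k) (gS k km)); rewrite /P E /A.
  by apply: nk; exists k.
split.
- by case/andP: hN.
- apply: (leq_trans (proj2 (andP hN))); rewrite size_map.
  apply: (leq_trans sL); rewrite -addSnnS.
  elim: (Delta.+2 + t)%N => // D IH; rewrite !expnS; apply: leq_mul => //.
- have [M0|M0] := posnP M.
    by rewrite /t M0 trunc_log0.
  apply: (leq_trans (trunc_logP _ M0)) => //.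
  by apply: (leq_trans sW).
Qed.
End Main.

Theorem theorem12p2 (R : realType) (G : groupType) (X : topologicalType)
  (act : G -> X -> X) :
  compact [set: X] -> hausdorff_space X ->
  (exists a b c : X, [/\ a <> b, a <> c & b <> c]) ->
  convergence_action act ->
  null_system R act.
Proof.
move=> cX hX [a [_ [_ _]]] cA U s fU.
have [c [tl h]] := main_bound cX hX a cA s fU.
rewrite /htop_seq.
apply: (@an_lim R (size U) c _ tl) => n; have [h1 h2 h3] := h n; by [].
Qed.
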